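(* Let $\mathbf A$ be a finite subdirectly irreducible cBCK-algebra and let $\mathbf B$ be a subalgebra of $\mathbf A$. If there exist $a,b\in B$ such that $\gcd(\mathrm{h}_A(a),\mathrm{h}_A(b))=1$, then the universe $B$ is a downset of $\mathbf A$ (i.e., $x\in B$ and $y\le x$ in $\mathbf A$ imply $y\in B$).
   Context: A BCK-algebra is an algebra $(A,\ominus,0)$ of type $(2,0)$ satisfying $((x\ominus y)\ominus(x\ominus z))\ominus(z\ominus y)=0$, $x\ominus 0=x$, $0\ominus x=0$, and ($x\ominus y=0$ and $y\ominus x=0$ imply $x=y$); it is ordered by $x\le y$ iff $x\ominus y=0$. A cBCK-algebra is a BCK-algebra satisfying $x\ominus(x\ominus y)=y\ominus(y\ominus x)$; its order is a meet-semilattice with $x\wedge y=x\ominus(x\ominus y)$. Finite subdirectly irreducible cBCK-algebras are, as posets, rooted trees with root $0$ (with a unique atom if nontrivial). For $a\in A$, $\mathrm{h}_A(a)=|[0,a]|-1$ is the height of $a$ in $\mathbf A$. *)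

(* Defs.v *)
From mathcomp Require Import all_boot.
Set Implicit Arguments. Unset Strict Implicit. Unset Printing Implicit Defensive.

Section BCK.
Variables (T : finType) (sub : T -> T -> T) (z : T).

Definition bck_le (x y : T) : bool := sub x y == z.

Definition is_BCK : Prop :=
  [/\ (forall x y w, sub (sub (sub x y) (sub x w)) (sub w y) = z),
      (forall x, sub x z = x),
      (forall x, sub z x = z) &
      (forall x y, sub x y = z -> sub y x = z -> x = y)].

Definition is_cBCK : Prop :=
  is_BCK /\ forall x y, sub x (sub x y) = sub y (sub y x).

Definition is_congruence (th : rel T) : Prop :=
  [/\ reflexive th, symmetric th, transitive th &
      forall x1 x2 y1 y2, th x1 x2 -> th y1 y2 -> th (sub x1 y1) (sub x2 y2)].

(* subdirectly irreducible: nontrivial, and the non-identity congruences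
   have a common pair (a,b) with a <> b (i.e. there is a monolith). *)
Definition subdirectly_irreducible : Prop :=
  1 < #|T| /\
  exists a b : T, a != b /\
    forall th : rel T, is_congruence th ->
      (exists x y, x != y /\ th x y) -> th a b.

Definition is_subalgebra (B : {set T}) : Prop :=
  z \in B /\ forall x y, x \in B -> y \in B -> sub x y \in B.

Definition height (a : T) : nat := #|[set y | bck_le y a]|.-1.

Definition is_downset (B : {set T}) : Prop :=
  forall x y, x \in B -> bck_le y x -> y \in B.
End BCK.

(* Main.v *)
Require Import Defs.
From mathcomp Require Import all_boot.
From mathcomp Require Import zify.
Set Implicit Arguments. Unset Strict Implicit. Unset Printing Implicit Defensive.

Lemma bck_xx (T : finType) (s : T -> T -> T) z : is_BCK s z -> forall x, s x x = z.
Proof. case=> A1 A2 A3 A4 x. by have := A1 x z z; rewrite !A2. Qed.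

Lemma bck_trans (T : finType) (s : T -> T -> T) z : is_BCK s z ->
  forall x y w, s x y = z -> s y w = z -> s x w = z.
Proof. case=> A1 A2 A3 A4 x y w h1 h2. by have := A1 x w y; rewrite h1 h2 !A2. Qed.

Lemma bck_anti2 (T : finType) (s : T -> T -> T) z : is_BCK s z ->
  forall x y w, s y w = z -> s (s x w) (s x y) = z.
Proof. case=> A1 A2 A3 A4 x y w h. by have := A1 x w y; rewrite h A2. Qed.

Lemma bck_A1 (T : finType) (s : T -> T -> T) z : is_BCK s z ->
  forall x y w, s (s (s x y) (s x w)) (s w y) = z.
Proof. by case. Qed.

Lemma bck_le_sub (T : finType) (s : T -> T -> T) z : is_BCK s z ->
  forall x y, s (s x y) x = z.
Proof.
move=> H x y; have [A1 A2 A3 A4] := H.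
by have := bck_anti2 H x (A3 y); rewrite A2.
Qed.

Lemma bck_0le (T : finType) (s : T -> T -> T) z : is_BCK s z -> forall x, s z x = z.
Proof. by case. Qed.

Lemma bck_le0 (T : finType) (s : T -> T -> T) z : is_BCK s z -> forall x, s x z = z -> x = z.
Proof. case=> A1 A2 A3 A4 x h. by apply: A4 => //; rewrite A3. Qed.

Lemma bck_exch (T : finType) (s : T -> T -> T) z : is_BCK s z ->
  forall x y w, s (s x y) w = s (s x w) y.
Proof.
move=> H.
have key : forall x y w, s (s (s x y) w) (s (s x w) y) = z.
  move=> x y w; have [A1 A2 A3 A4] := H.
  apply: (bck_trans H (y := s (s x y) (s x (s x w)))).
    by apply: bck_anti2; have := A1 x z w; rewrite !A2.
  exact: A1.
move=> x y w; have [A1 A2 A3 A4] := H. by apply: A4; apply: key.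
Qed.

Lemma bck_mono1 (T : finType) (s : T -> T -> T) z : is_BCK s z ->
  forall x y w, s (s (s x w) (s y w)) (s x y) = z.
Proof.
move=> H x y w. rewrite (bck_exch H). exact: bck_A1.
Qed.

Lemma bck_mono (T : finType) (s : T -> T -> T) z : is_BCK s z ->
  forall x y w, s x y = z -> s (s x w) (s y w) = z.
Proof.
move=> H x y w h. have := bck_mono1 H x y w. rewrite h. by case: H => _ A2 _ _; rewrite A2.
Qed.

Definition is_ideal (T : finType) (s : T -> T -> T) (z : T) (I : pred T) :=
  z \in I /\ forall x y, s x y \in I -> y \in I -> x \in I.

Lemma ideal_down (T : finType) (s : T -> T -> T) z (I : pred T) :
  is_ideal s z I -> forall x y, s x y = z -> y \in I -> x \in I.
Proof. case=> I0 IC x y h yI. by apply: (IC x y) => //; rewrite h. Qed.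

Lemma monolith (T : finType) (s : T -> T -> T) z : is_BCK s z ->
  subdirectly_irreducible s ->
  exists w, w != z /\ forall I, is_ideal s z I -> (exists a, a \in I /\ a != z) -> w \in I.
Proof.
move=> H [_ [a0 [b0 [ne Hth]]]]; have [A1 A2 A3 A4] := H.
pose th (I : pred T) : rel T := fun x y => (s x y \in I) && (s y x \in I).
have thC : forall I, is_ideal s z I -> is_congruence s (th I).
  move=> I HI; have [I0 IC] := HI.
  have tr : transitive (th I).
    move=> y x w /andP[h1 h2] /andP[h3 h4]; apply/andP; split.
      apply: (IC _ (s x y)) => //; apply: (ideal_down HI _ h3).
      exact: (bck_A1 H x w y).
    apply: (IC _ (s w y)) => //; apply: (ideal_down HI _ h2).
    exact: (bck_A1 H w x y).
  split.
  - by move=> x; rewrite /th (bck_xx H) I0.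
  - by move=> x y; rewrite /th andbC.
  - exact: tr.
  move=> x1 x2 y1 y2 /andP[h1 h2] /andP[h3 h4].
  apply: (tr (s x2 y1)); apply/andP; split.
  - by apply: (ideal_down HI _ h1); apply: bck_mono1.
  - by apply: (ideal_down HI _ h2); apply: bck_mono1.
  - by apply: (ideal_down HI _ h4); apply: bck_A1.
  - by apply: (ideal_down HI _ h3); apply: bck_A1.
have key : forall I, is_ideal s z I -> (exists a, a \in I /\ a != z) ->
    (s a0 b0 \in I) && (s b0 a0 \in I).
  move=> I HI [a [aI anz]]; apply: (Hth (th I) (thC I HI)).
  exists a, z; split => //; rewrite /th A2 A3 aI; by case: HI => -> _.
case E: (s a0 b0 == z).
  exists (s b0 a0); split.
    apply/negP => /eqP E2; move/negP: ne; apply; apply/eqP; apply: A4 => //; exact/eqP.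
  by move=> I HI Hn; case/andP: (key I HI Hn).
exists (s a0 b0); split; first by rewrite E.
by move=> I HI Hn; case/andP: (key I HI Hn).
Qed.

Lemma meet_le (T : finType) (s : T -> T -> T) z : is_cBCK s z ->
  forall x y, s (s x (s x y)) y = z.
Proof. move=> [H C] x y. rewrite C. exact: bck_le_sub. Qed.

Lemma meet_glb (T : finType) (s : T -> T -> T) z : is_cBCK s z ->
  forall w x y, s w x = z -> s w y = z -> s w (s x (s x y)) = z.
Proof.
move=> [H C] w x y h1 h2; have [A1 A2 A3 A4] := H.
have e : s x (s x w) = w by rewrite C h1 A2.
have := bck_anti2 H x (bck_anti2 H x h2). by rewrite e.
Qed.

Lemma meet_id (T : finType) (s : T -> T -> T) z : is_cBCK s z ->
  forall x y, s y x = z -> s x (s x y) = y.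
Proof. move=> [H C] x y h. rewrite C h. by case: H. Qed.

Lemma polar_ideal (T : finType) (s : T -> T -> T) z : is_cBCK s z ->
  forall t, is_ideal s z [pred a | s a (s a t) == z].
Proof.
move=> HC t; have [H C] := HC; have [A1 A2 A3 A4] := H.
split; first by rewrite inE A3.
move=> x y; rewrite !inE => /eqP h1 /eqP h2; apply/eqP.
set m := s x (s x t).
have mx : s m x = z by exact: bck_le_sub.
have mt : s m t = z by exact: meet_le.
have h3 : s (s m y) (s (s x y) (s (s x y) t)) = z.
  apply: meet_glb => //; first exact: bck_mono.
  exact: (bck_trans H (bck_le_sub H m y) mt).
rewrite h1 A2 in h3.
have h4 := meet_glb HC h3 mt. rewrite h2 in h4.
exact: bck_le0 H _ h4.
Qed.

Lemma disj (T : finType) (s : T -> T -> T) z : is_cBCK s z ->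
  subdirectly_irreducible s ->
  forall a t, a != z -> t != z -> s a (s a t) = z -> False.
Proof.
move=> HC SI a t an tn h; have [H C] := HC; have [A1 A2 A3 A4] := H.
have [w [wn Hw]] := monolith H SI.
have h1 : w \in [pred x | s x (s x t) == z].
  apply: Hw; first exact: polar_ideal.
  by exists a; rewrite inE h eqxx.
have h2 : w \in [pred x | s x (s x w) == z].
  apply: Hw; first exact: polar_ideal.
  exists t; split => //. rewrite inE C. exact: h1.
move: h2; rewrite inE (bck_xx H) A2. by rewrite (negbTE wn).
Qed.

Definition D (T : finType) (s : T -> T -> T) (z : T) (x : T) := [set y | s y x == z].

Lemma atom (T : finType) (s : T -> T -> T) z : is_cBCK s z ->
  subdirectly_irreducible s ->
  exists u, u != z /\ forall a, a != z -> s u a = z.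
Proof.
move=> HC SI; have [H C] := HC; have [A1 A2 A3 A4] := H.
have [w [wn _]] := monolith H SI.
case: (@arg_minnP T w (fun u => u != z) (fun u => #|D s z u|) wn) => u un umin.
exists u; split => // a an.
set m := s a (s a u).
have mu : s m u = z by exact: meet_le.
have ma : s m a = z by exact: bck_le_sub.
have mn : m != z by apply/negP => /eqP E; apply: (disj HC SI an un E).
have sub : D s z m \subset D s z u.
  apply/subsetP => y; rewrite !inE => /eqP h; apply/eqP; exact: (bck_trans H h mu).
have := umin m mn => le.
have E : D s z m = D s z u by apply/eqP; rewrite eqEcard sub le.
have : u \in D s z m by rewrite E inE (bck_xx H).
rewrite inE => /eqP um. exact: (bck_trans H um ma).
Qed.

Lemma below_coatom (T : finType) (s : T -> T -> T) z u : is_cBCK s z ->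
  (forall a, a != z -> s u a = z) ->
  forall x y, s y x = z -> y != x -> s y (s x u) = z.
Proof.
move=> HC hu x y yx ne; have [H C] := HC; have [A1 A2 A3 A4] := H.
have n : s x y != z by apply/negP => /eqP h; move/negP: ne; apply; apply/eqP; apply: A4.
have := bck_anti2 H x (hu _ n). by rewrite (meet_id HC yx).
Qed.

Lemma card_lt (T : finType) (s : T -> T -> T) z u : is_cBCK s z ->
  u != z -> (forall a, a != z -> s u a = z) ->
  forall x, x != z -> #|D s z (s x u)| < #|D s z x|.
Proof.
move=> HC un hu x xn; have [H C] := HC; have [A1 A2 A3 A4] := H.
apply: proper_card; rewrite properE; apply/andP; split.
  apply/subsetP => y; rewrite !inE => /eqP h; apply/eqP.
  exact: (bck_trans H h (bck_le_sub H x u)).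
apply/subsetPn; exists x; first by rewrite inE (bck_xx H).
rewrite inE; apply/negP => /eqP h.
have e : s x u = x by apply: A4 => //; exact: bck_le_sub.
have := meet_id HC (hu _ xn). rewrite e (bck_xx H) => E.
by rewrite -E eqxx in un.
Qed.

Lemma chain (T : finType) (s : T -> T -> T) z u : is_cBCK s z ->
  u != z -> (forall a, a != z -> s u a = z) ->
  forall x y y', s y x = z -> s y' x = z -> s y y' = z \/ s y' y = z.
Proof.
move=> HC un hu x; have [H C] := HC; have [A1 A2 A3 A4] := H.
move: {2}#|D s z x| (leqnn #|D s z x|) => n; elim: n x => [|n IH] x.
  by rewrite leqn0 => /eqP/cards0_eq/setP/(_ x); rewrite !inE (bck_xx H) eqxx.
move=> hx y y' hy hy'.
case: (eqVneq y x) => [->|nyx]; first by right.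
case: (eqVneq y' x) => [->|nyx']; first by left.
have xn : x != z.
  apply/negP => /eqP E; move: hy; rewrite E => /(bck_le0 H) E2.
  by rewrite E2 E eqxx in nyx.
apply: (IH (s x u)).
- by rewrite -ltnS; apply: leq_trans hx; exact: card_lt.
- exact: below_coatom.
- exact: below_coatom.
Qed.

Lemma H1 (T : finType) (s : T -> T -> T) z u : is_cBCK s z ->
  u != z -> (forall a, a != z -> s u a = z) ->
  forall c d, s c d = z -> #|D s z (s d c)| + #|D s z c| = #|D s z d| + 1.
Proof.
move=> HC un hu c d cd; have [H C] := HC; have [A1 A2 A3 A4] := H.
pose U := [set y | (s c y == z) && (s y d == z)].
have E1 : D s z d = D s z c :|: U.
  apply/setP => y; rewrite !inE; apply/idP/idP.
    move=> /eqP yd; case: (chain HC un hu yd cd) => [->|->]; first by rewrite eqxx.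
    by rewrite yd eqxx orbT.
  case/orP => [/eqP yc|/andP[_ ->]] //; apply/eqP; exact: (bck_trans H yc cd).
have E2 : D s z c :&: U = [set c].
  apply/setP => y; rewrite !inE; apply/idP/idP.
    case/andP => /eqP yc /andP[/eqP cy _]; apply/eqP; exact: A4.
  by move/eqP => ->; rewrite (bck_xx H) cd eqxx.
have E3 : D s z (s d c) = [set s d y | y in U].
  apply/setP => e; rewrite inE; apply/idP/imsetP.
    move=> /eqP ec.
    have ed : s e d = z by exact: (bck_trans H ec (bck_le_sub H d c)).
    exists (s d e); last by rewrite (meet_id HC ed).
    rewrite inE (bck_le_sub H d e) eqxx andbT.
    have := bck_anti2 H d ec. by rewrite (meet_id HC cd) => ->.
  case=> y; rewrite inE => /andP[/eqP cy _] ->; apply/eqP; exact: bck_anti2.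
have inj : {in U &, injective (s d)}.
  move=> y1 y2; rewrite !inE => /andP[_ /eqP h1] /andP[_ /eqP h2] e.
  by rewrite -(meet_id HC h1) e (meet_id HC h2).
rewrite E3 (card_in_imset inj) E1 -(cards1 c) -E2 cardsUI.
by rewrite addnC.
Qed.

Lemma arith1 p q r : 0 < p -> 0 < q -> p + q = r + 1 -> r.-1 = p.-1 + q.-1.
Proof. lia. Qed.

Lemma arith2 q : q.-1 = 1 -> q <= 2.
Proof. lia. Qed.

Lemma D_ge1 (T : finType) (s : T -> T -> T) z : is_BCK s z -> forall x, 0 < #|D s z x|.
Proof. move=> H x; apply/card_gt0P; exists x; by rewrite inE (bck_xx H). Qed.

Lemma D_ge2 (T : finType) (s : T -> T -> T) z : is_BCK s z -> forall x, x != z ->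
  [set z; x] \subset D s z x.
Proof.
move=> H x xn; apply/subsetP => y; rewrite !inE => /orP[]/eqP ->.
  by rewrite (bck_0le H). by rewrite (bck_xx H).
Qed.

Theorem mainTheorem3 (T : finType) (sub : T -> T -> T) (z : T) (B : {set T}) :
  is_cBCK sub z ->
  subdirectly_irreducible sub ->
  is_subalgebra sub z B ->
  (exists a b, [/\ a \in B, b \in B & gcdn (height sub z a) (height sub z b) = 1]) ->
  is_downset sub z B.
Proof.
move=> HC SI [zB BC] [a [b [aB bB g]]].
set s := sub in HC SI BC g *.
have [H C] := HC; have [A1 A2 A3 A4] := H.
have hE : forall x, height s z x = #|D s z x|.-1 by [].
have [u [un hu]] := atom HC SI.
have Dz : #|D s z z| = 1.
  suff -> : D s z z = [set z] by rewrite cards1.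
  apply/setP => y; rewrite !inE.
  apply/idP/idP => /eqP h; apply/eqP; [exact: bck_le0 | by rewrite h (bck_xx H)].
have [e0 [e0B e0n]] : exists e, e \in B /\ e != z.
  case: (eqVneq a z) => [ea|an]; last by exists a.
  case: (eqVneq b z) => [eb|bn]; last by exists b.
  by move: g; rewrite ea eb !hE Dz.
case: (@arg_minnP T e0 (fun c => (c \in B) && (c != z)) (fun c => #|D s z c|));
  first by rewrite e0B e0n.
move=> c /andP[cB cn] cmin.
have c2 := subset_leq_card (D_ge2 H cn); rewrite cards2 eq_sym cn in c2.
have dv : forall n e, #|D s z e| <= n -> e \in B -> height s z c %| height s z e.
  elim=> [|n IH] e; first by rewrite leqNgt D_ge1.
  move=> he eB.
  case: (eqVneq e z) => [->|en]; first by rewrite (hE z) Dz dvdn0.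
  set m := s e (s e c).
  have mB : m \in B by apply: (BC _ _ eB (BC _ _ eB cB)).
  have mc : s m c = z by exact: meet_le.
  have me : s m e = z by exact: bck_le_sub.
  have mn : m != z by apply/negP => /eqP E; apply: (disj HC SI en cn E).
  have sb : D s z m \subset D s z c.
    apply/subsetP => y; rewrite !inE => /eqP h; apply/eqP; exact: (bck_trans H h mc).
  have EE : D s z m = D s z c by apply/eqP; rewrite eqEcard sb cmin // mB mn.
  have ce : s c e = z.
    have : c \in D s z m by rewrite EE inE (bck_xx H).
    rewrite inE => /eqP cm. exact: (bck_trans H cm me).
  have h1 := H1 HC un hu ce.
  have ecB : s e c \in B by apply: (BC _ _ eB cB).
  have lt : #|D s z (s e c)| <= n.
    rewrite -ltnS; apply: leq_trans he; rewrite -(ltn_add2r #|D s z c|) h1.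
    by rewrite ltn_add2l.
  have := IH _ lt ecB.
  have -> : height s z e = height s z (s e c) + height s z c.
    rewrite !hE; exact: (arith1 (D_ge1 H (s e c)) (D_ge1 H c) h1).
  by move=> d; rewrite dvdn_addl.
have hc1 : height s z c = 1.
  apply/eqP; rewrite -dvdn1 -g dvdn_gcd.
  by rewrite (dv _ _ (leqnn _) aB) (dv _ _ (leqnn _) bB).
have uB : u \in B.
  have ED : D s z c = [set z; c].
    apply/esym/eqP; rewrite eqEcard D_ge2 // cards2 eq_sym cn.
    by apply: arith2; rewrite -hE.
  have : u \in D s z c by rewrite inE (hu _ cn).
  by rewrite ED !inE (negbTE un) /= => /eqP ->.
have main : forall n x, #|D s z x| <= n -> x \in B -> forall y, s y x = z -> y \in B.
  elim=> [|n IH] x; first by rewrite leqNgt D_ge1.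
  move=> hx xB y yx.
  case: (eqVneq y x) => [->|nyx] //.
  have xn : x != z.
    apply/negP => /eqP E; move: yx; rewrite E => /(bck_le0 H) E2.
    by rewrite E2 E eqxx in nyx.
  apply: (IH (s x u)).
  - by rewrite -ltnS; apply: leq_trans hx; exact: card_lt.
  - exact: (BC _ _ xB uB).
  - exact: below_coatom.
move=> x y xB /eqP yx. exact: (main _ x (leqnn _) xB).
Qed.
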